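(* For every $\lambda>0$, the function $R_\lambda(e)=\partial_eF(\lambda,e)$ is strictly increasing and strictly concave on $I_\lambda$.
   Context: Let $\gamma>0$; let $a_1,\dots,a_p>0$ with weights $\omega_i>0$, $\sum_i\omega_i=1$, and $b_1,\dots,b_n>0$ with weights $\pi_j>0$, $\sum_j\pi_j=1$; put $a^*=\max_i a_i$, $b^*=\max_j b_j$. Define $G(e)=\sum_{j=1}^n\frac{b_j\pi_j}{1+\gamma b_j e}$, $J=\{e: e>-1/(\gamma b^* )\}$, and for $\lambda>0$, $I_\lambda=\{e\in J: G(e)<\lambda/a^*\}$. Define $F(\lambda,e)=e-\sum_{i=1}^p\frac{a_i\omega_i}{a_iG(e)-\lambda}$. *)

(* Defs.v *)
From Stdlib Require Import Reals.
Open Scope R_scope.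

Fixpoint sumR (f : nat -> R) (n : nat) : R :=
  match n with
  | O => 0
  | S k => sumR f k + f k
  end.

(* maxR f n = max_{k<n} f k  (for n >= 1 and positive values this is the max) *)
Fixpoint maxR (f : nat -> R) (n : nat) : R :=
  match n with
  | O => 0
  | S k => Rmax (maxR f k) (f k)
  end.

Definition Gfun (gamma : R) (n : nat) (b pi : nat -> R) (e : R) : R :=
  sumR (fun j => b j * pi j / (1 + gamma * b j * e)) n.

Definition inJ (gamma : R) (n : nat) (b : nat -> R) (e : R) : Prop :=
  e > - (1 / (gamma * maxR b n)).

Definition inI (gamma : R) (p n : nat) (a b pi : nat -> R) (lam e : R) : Prop :=
  inJ gamma n b e /\ Gfun gamma n b pi e < lam / maxR a p.

Definition Ffun (gamma : R) (p n : nat) (a omega b pi : nat -> R) (lam e : R) : R :=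
  e - sumR (fun i => a i * omega i / (a i * Gfun gamma n b pi e - lam)) p.

Definition strictly_increasing_on (D : R -> Prop) (f : R -> R) : Prop :=
  forall x y, D x -> D y -> x < y -> f x < f y.

Definition strictly_concave_on (D : R -> Prop) (f : R -> R) : Prop :=
  forall x y t, D x -> D y -> x <> y -> 0 < t < 1 ->
    t * f x + (1 - t) * f y < f (t * x + (1 - t) * y).

(* Main.v *)
Require Import Defs.
From Stdlib Require Import Reals Lra Lia Psatz.
Open Scope R_scope.

Lemma sumR_ext f g n : (forall k, (k < n)%nat -> f k = g k) -> sumR f n = sumR g n.
Proof. induction n; simpl; intros H; auto. rewrite IHn, H; auto. Qed.

Lemma sumR_scal c f n : sumR (fun k => c * f k) n = c * sumR f n.
Proof. induction n; simpl; [ring|]. rewrite IHn; ring. Qed.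

Lemma sumR_plus f g n : sumR (fun k => f k + g k) n = sumR f n + sumR g n.
Proof. induction n; simpl; [ring|]. rewrite IHn; ring. Qed.

Lemma sumR_le f g n : (forall k, (k < n)%nat -> f k <= g k) -> sumR f n <= sumR g n.
Proof. induction n; simpl; intros H; [lra|]. assert (H1 := IHn ltac:(auto)). assert (H2 := H n ltac:(lia)). lra. Qed.

Lemma sumR_lt f g n : (0 < n)%nat -> (forall k, (k < n)%nat -> f k < g k) -> sumR f n < sumR g n.
Proof. induction n; simpl; intros Hn H; [lia|]. destruct n.
 - simpl. assert (H2 := H 0%nat ltac:(lia)). lra.
 - assert (H1 := IHn ltac:(lia) ltac:(auto)). assert (H2 := H (S n) ltac:(lia)). lra. Qed.

Lemma sumR_pos f n : (0 < n)%nat -> (forall k, (k < n)%nat -> 0 < f k) -> 0 < sumR f n.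
Proof. intros Hn H. assert (E : sumR (fun _ => 0) n = 0) by (clear; induction n; simpl; lra).
 rewrite <- E. apply sumR_lt; auto. Qed.

Lemma maxR_ge f n k : (k < n)%nat -> f k <= maxR f n.
Proof. induction n; simpl; intros H; [lia|]. destruct (Nat.eq_dec k n).
 subst; apply Rmax_r. eapply Rle_trans; [apply IHn; lia| apply Rmax_l]. Qed.

Lemma dpl_eq f x l1 l2 : derivable_pt_lim f x l1 -> l1 = l2 -> derivable_pt_lim f x l2.
Proof. intros H ->; exact H. Qed.

Lemma dpl_sum (f : nat -> R -> R) (df : nat -> R) n e :
  (forall k, (k < n)%nat -> derivable_pt_lim (f k) e (df k)) ->
  derivable_pt_lim (fun x => sumR (fun k => f k x) n) e (sumR df n).
Proof. induction n; simpl; intros H.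
 - exact (derivable_pt_lim_const 0 e).
 - apply (derivable_pt_lim_plus (fun x => sumR (fun k => f k x) n) (f n)); auto. Qed.

Lemma dpl_affine c d e : derivable_pt_lim (fun x => c + d * x) e d.
Proof. eapply dpl_eq. apply (derivable_pt_lim_plus (fct_cte c) (mult_real_fct d id)
   _ _ _ (derivable_pt_lim_const c e) (derivable_pt_lim_scal id d e 1 (derivable_pt_lim_id e))). ring. Qed.

Lemma dpl_inv c g e l : derivable_pt_lim g e l -> g e <> 0 ->
  derivable_pt_lim (fun x => c / g x) e (- c * l / (g e * g e)).
Proof. intros H Hg. eapply dpl_eq. apply (derivable_pt_lim_div (fct_cte c) g _ _ _ (derivable_pt_lim_const c e) H Hg). unfold fct_cte, Rsqr. field; auto. Qed.

Lemma sumR_opp f n : sumR (fun k => - f k) n = - sumR f n.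
Proof. induction n; simpl; [ring|]. rewrite IHn; ring. Qed.

Lemma sumR_comb_le f g h t s n : (forall k, (k < n)%nat -> f k <= t * g k + s * h k) ->
  sumR f n <= t * sumR g n + s * sumR h n.
Proof. intros H. rewrite <- !sumR_scal, <- sumR_plus. apply sumR_le; auto. Qed.

Lemma sumR_comb_lt f g h t s n : (0 < n)%nat -> (forall k, (k < n)%nat -> f k < t * g k + s * h k) ->
  sumR f n < t * sumR g n + s * sumR h n.
Proof. intros Hn H. rewrite <- !sumR_scal, <- sumR_plus. apply sumR_lt; auto. Qed.

Lemma inv_conv_strict x y t : 0 < x -> 0 < y -> x <> y -> 0 < t < 1 ->
  1 / (t * x + (1 - t) * y) < t / x + (1 - t) / y.
Proof. intros Hx Hy Hxy Ht. set (m := t*x+(1-t)*y). assert (Hm : 0 < m) by (unfold m; nra).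
 assert (E : t / x + (1 - t) / y - 1 / m = t*(1-t)*((x-y)*(x-y)) / (x*y*m)).
 { assert (Hm0 : t*x+(1-t)*y <> 0) by (unfold m in Hm; lra). unfold m; field; repeat split; lra. }
 assert (0 < t*(1-t)*((x-y)*(x-y)) / (x*y*m)).
 { apply Rdiv_lt_0_compat. apply Rmult_lt_0_compat. nra. assert (x - y <> 0) by lra. nra.
   apply Rmult_lt_0_compat; [nra|lra]. }
 lra. Qed.

Lemma inv_conv x y t : 0 < x -> 0 < y -> 0 < t < 1 ->
  1 / (t * x + (1 - t) * y) <= t / x + (1 - t) / y.
Proof. intros. destruct (Req_dec x y). subst. right. replace (t*y+(1-t)*y) with y by ring. field. lra.
 left; apply inv_conv_strict; auto. Qed.

Lemma sq_conv A B t : 0 < t < 1 -> (t*A+(1-t)*B)*(t*A+(1-t)*B) <= t*(A*A)+(1-t)*(B*B).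
Proof. intros. assert (0 <= t*(1-t)*((A-B)*(A-B))).
 { apply Rmult_le_pos. apply Rmult_le_pos; lra. apply Rle_0_sqr. }
 assert (E : t*(A*A)+(1-t)*(B*B) - (t*A+(1-t)*B)*(t*A+(1-t)*B) = t*(1-t)*((A-B)*(A-B))) by ring. lra. Qed.

Lemma inv2_conv_gen x y t strict : 0 < x -> 0 < y -> 0 < t < 1 -> (strict -> x <> y) ->
  (strict -> 1 / ((t * x + (1 - t) * y)*(t * x + (1 - t) * y)) < t / (x*x) + (1 - t) / (y*y)) /\
  1 / ((t * x + (1 - t) * y)*(t * x + (1 - t) * y)) <= t / (x*x) + (1 - t) / (y*y).
Proof. intros Hx Hy Ht Hs. set (m := t*x+(1-t)*y). assert (Hm : 0 < m) by (unfold m; nra).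
 assert (E1 : 1 / (m*m) = (1/m)*(1/m)) by (field; lra).
 assert (E2 : t / (x*x) + (1-t)/(y*y) = t*((1/x)*(1/x)) + (1-t)*((1/y)*(1/y))) by (field; lra).
 rewrite E1, E2. assert (S := sq_conv (1/x) (1/y) t Ht).
 assert (E3 : t * (1/x) + (1-t)*(1/y) = t/x+(1-t)/y) by (field; lra). rewrite E3 in S.
 assert (P : 0 < 1/m) by (apply Rdiv_lt_0_compat; lra).
 split.
 - intros st. assert (L := inv_conv_strict x y t Hx Hy (Hs st) Ht). fold m in L.
   assert ((1/m)*(1/m) < (t/x+(1-t)/y)*(t/x+(1-t)/y)) by nra. lra.
 - assert (L := inv_conv x y t Hx Hy Ht). fold m in L.
   assert ((1/m)*(1/m) <= (t/x+(1-t)/y)*(t/x+(1-t)/y)) by nra. lra. Qed.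

Lemma inv_dec' x y : 0 < x -> x <= y -> 1/y <= 1/x.
Proof. intros. unfold Rdiv; rewrite !Rmult_1_l. apply Rinv_le_contravar; auto. Qed.

Lemma inv_dec_strict x y : 0 < x -> x < y -> 1/y < 1/x.
Proof. intros. unfold Rdiv; rewrite !Rmult_1_l. apply Rinv_lt_contravar; auto. nra. Qed.

Lemma inv2_dec_strict x y : 0 < x -> x < y -> 1/(y*y) < 1/(x*x).
Proof. intros. assert (0 < x*x) by (apply Rmult_lt_0_compat; lra).
 assert (x*x < y*y) by (apply Rmult_le_0_lt_compat; lra).
 apply inv_dec_strict; auto. Qed.

Lemma inv2_dec x y : 0 < x -> x <= y -> 1/(y*y) <= 1/(x*x).
Proof. intros. assert (0 < x*x) by (apply Rmult_lt_0_compat; lra).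
 assert (x*x <= y*y) by (apply Rmult_le_compat; lra).
 apply inv_dec'; auto. Qed.

Definition Uf gamma n (b pi : nat -> R) e := sumR (fun j => b j * pi j * (gamma * b j) * (1 / ((1 + gamma * b j * e) * (1 + gamma * b j * e)))) n.
Definition Vf gamma p n (a omega b pi : nat -> R) lam e := sumR (fun i => a i * omega i * a i * (1 / ((lam - a i * Gfun gamma n b pi e) * (lam - a i * Gfun gamma n b pi e)))) p.

Theorem proposition3p14
  (gamma : R) (p n : nat) (a omega b pi : nat -> R)
  (Hgamma : 0 < gamma)
  (Ha : forall i, (i < p)%nat -> 0 < a i)
  (Homega : forall i, (i < p)%nat -> 0 < omega i)
  (Homega1 : sumR omega p = 1)
  (Hb : forall j, (j < n)%nat -> 0 < b j)
  (Hpi : forall j, (j < n)%nat -> 0 < pi j)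
  (Hpi1 : sumR pi n = 1) :
  forall lam : R, 0 < lam ->
    (forall e, inI gamma p n a b pi lam e ->
       exists l, derivable_pt_lim (Ffun gamma p n a omega b pi lam) e l) /\
    (forall Rl : R -> R,
       (forall e, inI gamma p n a b pi lam e ->
          derivable_pt_lim (Ffun gamma p n a omega b pi lam) e (Rl e)) ->
       strictly_increasing_on (inI gamma p n a b pi lam) Rl /\
       strictly_concave_on (inI gamma p n a b pi lam) Rl).
Proof.
  intros lam Hlam.
  assert (Hn : (0 < n)%nat) by (destruct n; simpl in Hpi1; [lra|lia]).
  assert (Hp : (0 < p)%nat) by (destruct p; simpl in Homega1; [lra|lia]).
  assert (Hbs : 0 < maxR b n) by (eapply Rlt_le_trans; [apply (Hb 0%nat Hn)| apply maxR_ge; auto]).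
  assert (Has : 0 < maxR a p) by (eapply Rlt_le_trans; [apply (Ha 0%nat Hp)| apply maxR_ge; auto]).
  assert (HD : forall e j, inJ gamma n b e -> (j < n)%nat -> 0 < 1 + gamma * b j * e).
  { intros e j He Hj. unfold inJ in He. assert (Hbj := maxR_ge b n j Hj). assert (Hbj0 := Hb j Hj).
    destruct (Rle_lt_dec 0 e).
    - assert (0 <= gamma * b j * e) by (apply Rmult_le_pos; [nra|lra]). lra.
    - assert (H1 : gamma * maxR b n * e > -1).
      { assert (Hg : 0 < gamma * maxR b n) by nra.
        assert (E : gamma * maxR b n * (- (1 / (gamma * maxR b n))) = -1) by (field; lra).
        assert (gamma * maxR b n * e > gamma * maxR b n * (- (1 / (gamma * maxR b n)))) by
          (apply Rmult_gt_compat_l; lra). lra. }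
      assert (gamma * (maxR b n - b j) * e <= 0).
      { assert (0 <= gamma * (maxR b n - b j)) by (apply Rmult_le_pos; lra). nra. }
      nra. }
  assert (HGpos : forall e, inJ gamma n b e -> 0 < Gfun gamma n b pi e).
  { intros e He. apply sumR_pos; auto. intros j Hj. apply Rdiv_lt_0_compat; auto.
    apply Rmult_lt_0_compat; auto. }
  assert (HaG : forall e i, inI gamma p n a b pi lam e -> (i < p)%nat -> 0 < lam - a i * Gfun gamma n b pi e).
  { intros e i [HJ HG] Hi. assert (Hai := maxR_ge a p i Hi). assert (Hg := HGpos e HJ).
    assert (maxR a p * Gfun gamma n b pi e < lam).
    { apply Rmult_lt_compat_l with (r := maxR a p) in HG; auto.
      replace (maxR a p * (lam / maxR a p)) with lam in HG by (field; lra). lra. }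
    assert (a i * Gfun gamma n b pi e <= maxR a p * Gfun gamma n b pi e) by (apply Rmult_le_compat_r; lra).
    lra. }
  assert (HdG : forall e, inJ gamma n b e ->
     derivable_pt_lim (fun x => Gfun gamma n b pi x) e (- Uf gamma n b pi e)).
  { intros e He.
    change (derivable_pt_lim (fun x => sumR (fun j => (fun j x => b j * pi j / (1 + gamma * b j * x)) j x) n) e
      (- Uf gamma n b pi e)).
    eapply dpl_eq.
    - apply dpl_sum with (df := fun j => - (b j * pi j * (gamma * b j) * (1 / ((1 + gamma * b j * e) * (1 + gamma * b j * e))))).
      intros j Hj. eapply dpl_eq.
      + apply (dpl_inv (b j * pi j) (fun x => 1 + gamma * b j * x) e (gamma * b j)).
        apply dpl_affine. apply Rgt_not_eq, HD; auto.
      + simpl. assert (H0 := HD e j He Hj). field. lra.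
    - unfold Uf. apply sumR_opp. }
  assert (HdF : forall e, inI gamma p n a b pi lam e ->
     derivable_pt_lim (Ffun gamma p n a omega b pi lam) e (1 - Uf gamma n b pi e * Vf gamma p n a omega b pi lam e)).
  { intros e He. unfold Ffun.
    eapply dpl_eq.
    - apply (derivable_pt_lim_minus id (fun x => sumR (fun i => (fun i x => a i * omega i / (a i * Gfun gamma n b pi x - lam)) i x) p)).
      apply derivable_pt_lim_id.
      apply dpl_sum with (df := fun i => Uf gamma n b pi e * (a i * omega i * a i * (1 / ((lam - a i * Gfun gamma n b pi e) * (lam - a i * Gfun gamma n b pi e))))).
      intros i Hi. eapply dpl_eq.
      + apply (dpl_inv (a i * omega i) (fun x => a i * Gfun gamma n b pi x - lam) e (a i * (- Uf gamma n b pi e) - 0)).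
        apply (derivable_pt_lim_minus (mult_real_fct (a i) (fun x => Gfun gamma n b pi x)) (fct_cte lam)).
        apply derivable_pt_lim_scal. apply HdG, He. apply derivable_pt_lim_const.
        assert (H0 := HaG e i He Hi). lra.
      + assert (H0 := HaG e i He Hi). field. lra.
    - rewrite sumR_scal. unfold Vf. ring. }
  split. { intros e He. eexists; apply HdF, He. }
  intros Rl HRl.
  assert (HR : forall e, inI gamma p n a b pi lam e -> Rl e = 1 - Uf gamma n b pi e * Vf gamma p n a omega b pi lam e).
  { intros e He. eapply uniqueness_limite; [apply HRl | apply HdF]; auto. }
  assert (HUpos : forall e, inJ gamma n b e -> 0 < Uf gamma n b pi e).
  { intros e He. apply sumR_pos; auto. intros j Hj. assert (H0 := HD e j He Hj).
    assert (Hbj := Hb j Hj). assert (Hpj := Hpi j Hj).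
    apply Rmult_lt_0_compat. apply Rmult_lt_0_compat. nra. nra.
    apply Rdiv_lt_0_compat; [lra|nra]. }
  assert (HVpos : forall e, inI gamma p n a b pi lam e -> 0 < Vf gamma p n a omega b pi lam e).
  { intros e He. apply sumR_pos; auto. intros i Hi. assert (H0 := HaG e i He Hi).
    assert (Hai := Ha i Hi). assert (Hoi := Homega i Hi).
    apply Rmult_lt_0_compat. apply Rmult_lt_0_compat. nra. nra.
    apply Rdiv_lt_0_compat; [lra|nra]. }
  assert (HUmono : forall x y, inJ gamma n b x -> inJ gamma n b y -> x < y -> Uf gamma n b pi y < Uf gamma n b pi x).
  { intros x y Hx Hy Hxy. apply sumR_lt; auto. intros j Hj.
    assert (H0 := HD x j Hx Hj). assert (Hbj := Hb j Hj). assert (Hpj := Hpi j Hj).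
    apply Rmult_lt_compat_l. apply Rmult_lt_0_compat; nra.
    apply inv2_dec_strict; auto. assert (gamma * b j * x < gamma * b j * y) by (apply Rmult_lt_compat_l; nra). lra. }
  assert (HGmono : forall x y, inJ gamma n b x -> inJ gamma n b y -> x <= y -> Gfun gamma n b pi y <= Gfun gamma n b pi x).
  { intros x y Hx Hy Hxy. apply sumR_le; auto. intros j Hj.
    assert (H0 := HD x j Hx Hj). assert (H1 := HD y j Hy Hj). assert (Hbj := Hb j Hj). assert (Hpj := Hpi j Hj).
    replace (b j * pi j / (1 + gamma * b j * y)) with (b j * pi j * (1 / (1 + gamma * b j * y))) by (field; lra).
    replace (b j * pi j / (1 + gamma * b j * x)) with (b j * pi j * (1 / (1 + gamma * b j * x))) by (field; lra).
    apply Rmult_le_compat_l. nra.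
    apply inv_dec'; auto. assert (gamma * b j * x <= gamma * b j * y) by (apply Rmult_le_compat_l; nra). lra. }
  assert (HVmono : forall x y, inI gamma p n a b pi lam x -> inI gamma p n a b pi lam y -> x <= y ->
     Vf gamma p n a omega b pi lam y <= Vf gamma p n a omega b pi lam x).
  { intros x y Hx Hy Hxy. apply sumR_le; auto. intros i Hi.
    assert (H0 := HaG x i Hx Hi). assert (Hai := Ha i Hi). assert (Hoi := Homega i Hi).
    assert (HG := HGmono x y (proj1 Hx) (proj1 Hy) Hxy).
    apply Rmult_le_compat_l. nra.
    apply inv2_dec; auto. assert (a i * Gfun gamma n b pi y <= a i * Gfun gamma n b pi x) by (apply Rmult_le_compat_l; lra). lra. }
  split.
  { intros x y Hx Hy Hxy. rewrite (HR x Hx), (HR y Hy).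
    assert (U1 := HUmono x y (proj1 Hx) (proj1 Hy) Hxy).
    assert (V1 := HVmono x y Hx Hy (Rlt_le _ _ Hxy)).
    assert (P1 := HVpos y Hy). assert (P2 := HUpos x (proj1 Hx)).
    assert (Uf gamma n b pi y * Vf gamma p n a omega b pi lam y < Uf gamma n b pi x * Vf gamma p n a omega b pi lam y)
      by (apply Rmult_lt_compat_r; auto).
    assert (Uf gamma n b pi x * Vf gamma p n a omega b pi lam y <= Uf gamma n b pi x * Vf gamma p n a omega b pi lam x)
      by (apply Rmult_le_compat_l; lra).
    lra. }
  intros x y t Hx Hy Hxy Ht.
  assert (HJz : inJ gamma n b (t * x + (1 - t) * y)).
  { destruct Hx as [Hx _]; destruct Hy as [Hy _]. unfold inJ in *.
    set (K := - (1 / (gamma * maxR b n))) in *.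
    assert (E : t * x + (1 - t) * y - K = t * (x - K) + (1 - t) * (y - K)) by ring.
    assert (0 < t * (x - K)) by (apply Rmult_lt_0_compat; lra).
    assert (0 < (1 - t) * (y - K)) by (apply Rmult_lt_0_compat; lra). lra. }
  assert (HDz : forall j, 1 + gamma * b j * (t * x + (1 - t) * y) = t * (1 + gamma * b j * x) + (1 - t) * (1 + gamma * b j * y)) by (intros; ring).
  assert (HGconv : Gfun gamma n b pi (t * x + (1 - t) * y) <= t * Gfun gamma n b pi x + (1 - t) * Gfun gamma n b pi y).
  { apply sumR_comb_le. intros j Hj. rewrite HDz.
    assert (H0 := HD x j (proj1 Hx) Hj). assert (H1 := HD y j (proj1 Hy) Hj).
    assert (Hbj := Hb j Hj). assert (Hpj := Hpi j Hj).
    assert (L := inv_conv _ _ t H0 H1 Ht).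
    assert (0 < b j * pi j) by nra.
    set (X := 1 + gamma * b j * x) in *. set (Y := 1 + gamma * b j * y) in *.
    assert (Hm : 0 < t * X + (1 - t) * Y) by nra.
    replace (b j * pi j / (t * X + (1 - t) * Y)) with (b j * pi j * (1 / (t * X + (1 - t) * Y))) by (field; lra).
    replace (t * (b j * pi j / X) + (1 - t) * (b j * pi j / Y)) with (b j * pi j * (t / X + (1 - t) / Y)) by (field; lra).
    apply Rmult_le_compat_l; lra. }
  assert (HIz : inI gamma p n a b pi lam (t * x + (1 - t) * y)).
  { split; auto. destruct Hx as [_ Hx]; destruct Hy as [_ Hy].
    assert (t * Gfun gamma n b pi x < t * (lam / maxR a p)) by (apply Rmult_lt_compat_l; lra).
    assert ((1 - t) * Gfun gamma n b pi y < (1 - t) * (lam / maxR a p)) by (apply Rmult_lt_compat_l; lra).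
    lra. }
  set (z := t * x + (1 - t) * y) in *.
  assert (HUconv : Uf gamma n b pi z < t * Uf gamma n b pi x + (1 - t) * Uf gamma n b pi y).
  { apply sumR_comb_lt; auto. intros j Hj. unfold z; rewrite HDz.
    assert (H0 := HD x j (proj1 Hx) Hj). assert (H1 := HD y j (proj1 Hy) Hj).
    assert (Hbj := Hb j Hj). assert (Hpj := Hpi j Hj).
    assert (HXY : 1 + gamma * b j * x <> 1 + gamma * b j * y).
    { intro E. assert (gamma * b j * (x - y) = 0) by lra.
      apply Rmult_integral in H. destruct H as [H|H]; [nra|lra]. }
    destruct (inv2_conv_gen _ _ t True H0 H1 Ht (fun _ => HXY)) as [L _].
    assert (Hc : 0 < b j * pi j * (gamma * b j)) by (apply Rmult_lt_0_compat; nra).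
    set (X := 1 + gamma * b j * x) in *. set (Y := 1 + gamma * b j * y) in *.
    replace (t * (b j * pi j * (gamma * b j) * (1 / (X * X))) + (1 - t) * (b j * pi j * (gamma * b j) * (1 / (Y * Y))))
      with (b j * pi j * (gamma * b j) * (t / (X * X) + (1 - t) / (Y * Y))) by (field; lra).
    apply Rmult_lt_compat_l; auto. }
  assert (HVconv : Vf gamma p n a omega b pi lam z <= t * Vf gamma p n a omega b pi lam x + (1 - t) * Vf gamma p n a omega b pi lam y).
  { apply sumR_comb_le. intros i Hi.
    assert (H0 := HaG x i Hx Hi). assert (H1 := HaG y i Hy Hi). assert (H2 := HaG z i HIz Hi).
    assert (Hai := Ha i Hi). assert (Hoi := Homega i Hi).
    assert (Hc : 0 < a i * omega i * a i) by (apply Rmult_lt_0_compat; nra).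
    assert (Hq : t * (lam - a i * Gfun gamma n b pi x) + (1 - t) * (lam - a i * Gfun gamma n b pi y) <= lam - a i * Gfun gamma n b pi z).
    { assert (a i * Gfun gamma n b pi z <= a i * (t * Gfun gamma n b pi x + (1 - t) * Gfun gamma n b pi y)) by (apply Rmult_le_compat_l; lra). lra. }
    destruct (inv2_conv_gen _ _ t False H0 H1 Ht (fun f => False_ind _ f)) as [_ L].
    set (X := lam - a i * Gfun gamma n b pi x) in *. set (Y := lam - a i * Gfun gamma n b pi y) in *.
    set (Z := lam - a i * Gfun gamma n b pi z) in *.
    assert (Hm : 0 < t * X + (1 - t) * Y) by nra.
    assert (L2 := inv2_dec _ _ Hm Hq).
    replace (t * (a i * omega i * a i * (1 / (X * X))) + (1 - t) * (a i * omega i * a i * (1 / (Y * Y))))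
      with (a i * omega i * a i * (t / (X * X) + (1 - t) / (Y * Y))) by (field; lra).
    apply Rmult_le_compat_l; lra. }
  assert (Hprod : 0 <= (Uf gamma n b pi x - Uf gamma n b pi y) * (Vf gamma p n a omega b pi lam x - Vf gamma p n a omega b pi lam y)).
  { destruct (Rlt_or_le x y) as [Hl|Hl].
    - assert (U1 := HUmono x y (proj1 Hx) (proj1 Hy) Hl). assert (V1 := HVmono x y Hx Hy (Rlt_le _ _ Hl)).
      apply Rmult_le_pos; lra.
    - assert (Hl' : y < x) by lra.
      assert (U1 := HUmono y x (proj1 Hy) (proj1 Hx) Hl'). assert (V1 := HVmono y x Hy Hx Hl).
      rewrite <- (Rmult_opp_opp (_ - _)), !Ropp_minus_distr.
      apply Rmult_le_pos; lra. }
  assert (HVz := HVpos z HIz). assert (HUx := HUpos x (proj1 Hx)). assert (HUy := HUpos y (proj1 Hy)).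
  rewrite (HR x Hx), (HR y Hy), (HR z HIz).
  set (Ux := Uf gamma n b pi x) in *. set (Uy := Uf gamma n b pi y) in *. set (Uz := Uf gamma n b pi z) in *.
  set (Vx := Vf gamma p n a omega b pi lam x) in *. set (Vy := Vf gamma p n a omega b pi lam y) in *.
  set (Vz := Vf gamma p n a omega b pi lam z) in *.
  assert (S1 : Uz * Vz < (t * Ux + (1 - t) * Uy) * Vz) by (apply Rmult_lt_compat_r; auto).
  assert (S2 : (t * Ux + (1 - t) * Uy) * Vz <= (t * Ux + (1 - t) * Uy) * (t * Vx + (1 - t) * Vy))
    by (apply Rmult_le_compat_l; [nra|lra]).
  assert (E : (t * Ux + (1 - t) * Uy) * (t * Vx + (1 - t) * Vy) = t * (Ux * Vx) + (1 - t) * (Uy * Vy) - t * (1 - t) * ((Ux - Uy) * (Vx - Vy))) by ring.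
  assert (0 <= t * (1 - t) * ((Ux - Uy) * (Vx - Vy))) by (apply Rmult_le_pos; [apply Rmult_le_pos|]; lra).
  lra.
Qed.
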